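(* Let $\mathcal{L}_{ED}:=\{L_{\varepsilon,\delta}:\varepsilon\ge0,\delta\in[0,1]\}$. There exist $\varepsilon\ge0$ and $\delta\in[0,1]$ such that, with budget $B:=L_{\varepsilon,\delta}\in\mathcal{L}_{ED}$, the natural filter with queries in $\mathcal{L}_{ED}$ and query capacity $k=2$ is not free, i.e. $\mathrm{PLD}(\mathrm{Filter}_{\mathcal{L}_{ED},B,2})\not\preceq B$.
   Context: For $\varepsilon\ge0,\delta\in[0,1]$, $f_{\varepsilon,\delta}(\alpha):=\max\{0,1-\delta-e^\varepsilon\alpha,e^{-\varepsilon}(1-\delta-\alpha)\}$, and $L_{\varepsilon,\delta}$ is the PLD whose tradeoff curve is $f_{\varepsilon,\delta}$ (the tradeoff curve of a pair $(P,Q)$ being $\alpha\mapsto\inf\{\beta_\phi:\alpha_\phi\le\alpha\}$ over tests with Type I error under $P$ and Type II error under $Q$). A PLD is the law of $\log\frac{dP}{dQ}(\omega)$, $\omega\sim P$; $\mathrm{Id}=L_{0,0}$ is the point mass at 0. Fix datasets $D_1,D_2$; $\mathrm{PLD}(M):=\mathrm{PLD}(M(D_1)\|M(D_2))$; $\preceq$ is the Blackwell order on PLDs, $\oplus$ convolution, $\sup$ least upper bound. A privacy rule of length $k$ maps sequences $(L_1,\dots,L_{k'})$, $0\le k'<k$, to sets of PLDs containing $\mathrm{Id}$; a $\Gamma$-adversary is an adaptive composition $M_1\otimes\cdots\otimes M_k$ with $\mathrm{PLD}(M_i(\cdot;y_{<i}))\in\Gamma(L_1,\dots,L_{i-1})$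 for every history of outputs; $\mathrm{PLD}(\Gamma)$ is the sup over $\Gamma$-adversaries. $\mathrm{Filter}_{\mathcal{L},B,k}(L_1,\dots,L_{k'}):=\{L\in\mathcal{L}:L_1\oplus\cdots\oplus L_{k'}\oplus L\preceq B\}$; the natural filter is free for $(\mathcal{L},B,k)$ if $\mathrm{PLD}(\mathrm{Filter}_{\mathcal{L},B,k})\preceq B$. *)

(* Defs.v *)
From HB Require Import structures.
From mathcomp Require Import all_boot all_order all_algebra.
From mathcomp Require Import all_classical all_reals all_analysis.
Set Implicit Arguments. Unset Strict Implicit. Unset Printing Implicit Defensive.
Import Order.TTheory GRing.Theory Num.Theory.
Local Open Scope classical_set_scope.
Local Open Scope ring_scope.

Section PrivacyDefs.
Variable R : realType.

(* f_{eps,delta}(alpha) = max{0, 1 - delta - e^eps alpha, e^{-eps}(1 - delta - alpha)} :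
   the tradeoff curve of the PLD L_{eps,delta}. *)
Definition fED (eps delta alpha : R) : R :=
  Num.max 0 (Num.max (1 - delta - expR eps * alpha)
                     (expR (- eps) * (1 - delta - alpha))).

Definition is_test d (T : measurableType d) (phi : T -> R) : Prop :=
  measurable_fun [set: T] phi /\ (forall x, 0 <= phi x <= 1).

(* Generic tradeoff curve of a pair of laws, each given by its expectation
   functional EP (law under D1, Type I error) and EQ (law under D2, Type II):
   alpha |-> inf { 1 - E_Q[phi] : phi test, E_P[phi] <= alpha }. *)
Definition tradeoff_of d (T : measurableType d) (EP EQ : (T -> R) -> R)
  (alpha : R) : R :=
  inf [set 1 - EQ phi | phi in [set phi | is_test phi /\ EP phi <= alpha]].

Definition expect d (T : measurableType d) (mu : {measure set T -> \bar R})
  (phi : T -> R) : R := fine (\int[mu]_x (phi x)%:E)%E.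

Definition expect_comp d1 d2 (Y1 : measurableType d1) (Y2 : measurableType d2)
  (P1 : {measure set Y1 -> \bar R}) (K : Y1 -> {measure set Y2 -> \bar R})
  (phi : Y1 * Y2 -> R) : R :=
  fine (\int[P1]_y1 \int[K y1]_y2 (phi (y1, y2))%:E)%E.

Definition tradeoff d (T : measurableType d) (P Q : {measure set T -> \bar R}) :=
  tradeoff_of (expect P) (expect Q).

(* tradeoff curve of the product pair (P1 x P2, Q1 x Q2); its PLD is
   PLD(P1||Q1) (+) PLD(P2||Q2) (convolution) *)
Definition tradeoff_prod d1 d2 (Y1 : measurableType d1) (Y2 : measurableType d2)
  (P1 Q1 : {measure set Y1 -> \bar R}) (P2 Q2 : {measure set Y2 -> \bar R}) :=
  tradeoff_of (expect_comp P1 (fun _ => P2)) (expect_comp Q1 (fun _ => Q2)).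

(* tradeoff curve of the adaptive composition M1 (x) M2: joint laws of
   (y1, y2) with y1 ~ M1(D_j), y2 ~ M2(D_j; y1) *)
Definition tradeoff_adaptive d1 d2 (Y1 : measurableType d1) (Y2 : measurableType d2)
  (P1 Q1 : {measure set Y1 -> \bar R}) (K1 K2 : Y1 -> {measure set Y2 -> \bar R}) :=
  tradeoff_of (expect_comp P1 K1) (expect_comp Q1 K2).

(* Blackwell order, on PLDs given through their tradeoff curves:
   L  <=  L'  iff  T(L') <= T(L) pointwise on [0,1]. *)
Definition blackwell_le (TL TL' : R -> R) : Prop :=
  forall alpha, 0 <= alpha <= 1 -> TL' alpha <= TL alpha.

Definition in_LED (TL : R -> R) : Prop :=
  exists eps delta, 0 <= eps /\ 0 <= delta <= 1 /\
    forall alpha, 0 <= alpha <= 1 -> TL alpha = fED eps delta alpha.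

(* A Filter_{L_ED, B, 2}-adversary with B = L_{eps,delta}: mechanism M1 with
   output laws P1 = M1(D1), Q1 = M1(D2), and mechanism M2 given by probability
   kernels K1 = M2(D1; .), K2 = M2(D2; .).
   - step 1: PLD(M1) in L_ED and PLD(M1) <= B;
   - step 2: for every history y1, PLD(M2(.; y1)) in L_ED and
             PLD(M1) (+) PLD(M2(.; y1)) <= B. *)
Definition ED_filter_adversary2 (eps delta : R)
  d1 d2 (Y1 : measurableType d1) (Y2 : measurableType d2)
  (P1 Q1 : probability Y1 R) (K1 K2 : R.-pker Y1 ~> Y2) : Prop :=
  (in_LED (tradeoff P1 Q1) /\ blackwell_le (tradeoff P1 Q1) (fED eps delta))
  /\ forall y1 : Y1,
       in_LED (tradeoff (K1 y1) (K2 y1)) /\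
       blackwell_le (tradeoff_prod P1 Q1 (K1 y1) (K2 y1)) (fED eps delta).

(* The natural filter is free for (L_ED, L_{eps,delta}, 2):
   PLD(Filter) = sup of the PLDs of all Filter-adversaries is <= B, i.e.
   B is an upper bound of all these PLDs. *)
Definition ED_natural_filter_free2 (eps delta : R) : Prop :=
  forall (d1 d2 : measure_display) (Y1 : measurableType d1)
         (Y2 : measurableType d2) (P1 Q1 : probability Y1 R)
         (K1 K2 : R.-pker Y1 ~> Y2),
    ED_filter_adversary2 eps delta P1 Q1 K1 K2 ->
    blackwell_le (tradeoff_adaptive P1 Q1 K1 K2) (fED eps delta).

End PrivacyDefs.

(* Main.v *)
Require Import Defs.
From HB Require Import structures.
From mathcomp Require Import all_boot all_order all_algebra.
From mathcomp Require Import all_classical all_reals all_analysis.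
From mathcomp Require Import lra measurable_realfun.
Import Order.TTheory GRing.Theory Num.Theory.
Local Open Scope classical_set_scope.
Local Open Scope ring_scope.

Section Aux.
Set Implicit Arguments. Unset Strict Implicit.
Context (R : realType).

Definition mu3 (a b c : {nonneg R}) : {measure set nat -> \bar R} :=
  measure_add (mscale a (@dirac _ nat 0%N R))
    (measure_add (mscale b (@dirac _ nat 1%N R)) (mscale c (@dirac _ nat 2%N R))).

Lemma mfun_nat (f : nat -> \bar R) : measurable_fun (@setT nat) f.
Proof. by move=> _ Y _; exact: I. Qed.

Lemma mfun_bool (f : bool -> \bar R) : measurable_fun (@setT bool) f.
Proof. by move=> _ Y _; exact: I. Qed.

Lemma int_mu3 a b c (f : nat -> \bar R) : (forall x, 0 <= f x)%E ->
  (\int[mu3 a b c]_x f x = a%:num%:E * f 0%N + b%:num%:E * f 1%N + c%:num%:E * f 2%N)%E.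
Proof.
move=> f0.
rewrite /mu3 ge0_integral_measure_add//.
rewrite ge0_integral_measure_add//.
rewrite !ge0_integral_mscale//.
rewrite !integral_dirac ?diracT ?mul1e ?addeA //.
Qed.

Lemma mu3_setT a b c : mu3 a b c [set: nat] = (a%:num + b%:num + c%:num)%:E.
Proof.
by rewrite /mu3 /= /msum !big_ord_recl big_ord0 /= /msum !big_ord_recl big_ord0 /= /mscale /= !diracT !mule1 !adde0 -!EFinD addrA.
Qed.

Definition nnq (n d : nat) : {nonneg R} :=
  NngNum (divr_ge0 (ler0n R n) (ler0n R d)).

Definition KA : bool -> {measure set nat -> \bar R} := fun b =>
  if b then mu3 (nnq 3 4) (nnq 0 1) (nnq 1 4) else mu3 (nnq 1 3) (nnq 2 3) (nnq 0 1).
Definition KB : bool -> {measure set nat -> \bar R} := fun b =>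
  if b then mu3 (nnq 1 4) (nnq 0 1) (nnq 3 4) else mu3 (nnq 0 1) (nnq 2 3) (nnq 1 3).

Lemma KA_meas U : measurable U -> measurable_fun [set: bool] (KA ^~ U).
Proof. by move=> _ _ Y _; exact: I. Qed.
Lemma KB_meas U : measurable U -> measurable_fun [set: bool] (KB ^~ U).
Proof. by move=> _ _ Y _; exact: I. Qed.

HB.instance Definition _ := isKernel.Build _ _ bool nat R KA KA_meas.
HB.instance Definition _ := isKernel.Build _ _ bool nat R KB KB_meas.

Lemma KA_prob x : KA x [set: nat] = 1%E.
Proof. by case: x; rewrite /KA mu3_setT /=; congr EFin; lra. Qed.
Lemma KB_prob x : KB x [set: nat] = 1%E.
Proof. by case: x; rewrite /KB mu3_setT /=; congr EFin; lra. Qed.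

HB.instance Definition _ := Kernel_isProbability.Build _ _ bool nat R KA KA_prob.
HB.instance Definition _ := Kernel_isProbability.Build _ _ bool nat R KB KB_prob.


Lemma expect_mu3 a b c (phi : nat -> R) : (forall x, 0 <= phi x) ->
  expect (mu3 a b c) phi = a%:num * phi 0%N + b%:num * phi 1%N + c%:num * phi 2%N.
Proof.
move=> h; rewrite /expect int_mu3; last by move=> x; rewrite lee_fin.
by rewrite -!EFinM -!EFinD.
Qed.

Lemma expect_bern (p : R) (phi : bool -> R) : 0 <= p <= 1 -> (forall x, 0 <= phi x) ->
  expect (bernoulli_prob p) phi = p * phi true + (1 - p) * phi false.
Proof.
move=> hp h; rewrite /expect integral_bernoulli_prob //. all: try (by move=> x; rewrite lee_fin).
all: by rewrite -!EFinM -!EFinD.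
Qed.

Lemma ec_mu3 (p : R) (K : bool -> {measure set nat -> \bar R}) (fa fb fc : bool -> {nonneg R})
  (phi : bool * nat -> R) : 0 <= p <= 1 -> (forall x, 0 <= phi x) ->
  (forall b, K b = mu3 (fa b) (fb b) (fc b)) ->
  expect_comp (bernoulli_prob p) K phi =
    p * ((fa true)%:num * phi (true, 0%N) + (fb true)%:num * phi (true, 1%N) + (fc true)%:num * phi (true, 2%N))
  + (1 - p) * ((fa false)%:num * phi (false, 0%N) + (fb false)%:num * phi (false, 1%N) + (fc false)%:num * phi (false, 2%N)).
Proof.
move=> hp h HK; rewrite /expect_comp.
rewrite (eq_integral (fun b => ((fa b)%:num * phi (b, 0%N) + (fb b)%:num * phi (b, 1%N) + (fc b)%:num * phi (b, 2%N))%:E)); last first.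
  move=> b _; rewrite HK int_mu3; last by move=> x; rewrite lee_fin.
  by rewrite -!EFinM -!EFinD.
rewrite integral_bernoulli_prob //.
all: try (by move=> b; rewrite lee_fin; apply: addr_ge0; [apply: addr_ge0|]; exact: mulr_ge0).
all: by rewrite -!EFinM -!EFinD.
Qed.


Lemma tr_ge d (T : measurableType d) (EP EQ : (T -> R) -> R) (al f0 : R) :
  (exists phi, is_test phi /\ EP phi <= al) ->
  (forall phi, is_test phi -> EP phi <= al -> f0 <= 1 - EQ phi) ->
  f0 <= tradeoff_of EP EQ al.
Proof.
move=> [phi0 h0] H; apply: lb_le_inf.
  by exists (1 - EQ phi0), phi0.
by move=> _ [phi [Ht Hle] <-]; exact: H.
Qed.

Lemma tr_le d (T : measurableType d) (EP EQ : (T -> R) -> R) (al : R) phi :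
  (forall psi, is_test psi -> EQ psi <= 1) ->
  is_test phi -> EP phi <= al ->
  tradeoff_of EP EQ al <= 1 - EQ phi.
Proof.
move=> HQ Ht Hle; apply: ge_inf; last by exists phi.
by exists 0 => _ [psi [Hp _] <-]; rewrite subr_ge0; exact: HQ.
Qed.

Lemma fED_leP (eps delta al b : R) : 0 <= b -> 1 - delta - expR eps * al <= b ->
  expR (- eps) * (1 - delta - al) <= b -> fED eps delta al <= b.
Proof. by move=> h1 h2 h3; rewrite /fED !ge_max h1 h2 h3. Qed.

Lemma le_fED1 (eps delta al b : R) : b <= 0 -> b <= fED eps delta al.
Proof. by move=> h; rewrite /fED le_max h. Qed.
Lemma le_fED2 (eps delta al b : R) : b <= 1 - delta - expR eps * al -> b <= fED eps delta al.
Proof. by move=> h; rewrite /fED !le_max h orbT. Qed.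
Lemma le_fED3 (eps delta al b : R) : b <= expR (- eps) * (1 - delta - al) -> b <= fED eps delta al.
Proof. by move=> h; rewrite /fED !le_max h !orbT. Qed.

Lemma expR_ln (x : R) : 0 < x -> expR (ln x) = x.
Proof. by move=> h; apply: lnK; rewrite posrE. Qed.

Definition tb (t f : R) : bool -> R := fun b => if b then t else f.
Definition tn (x0 x1 x2 : R) : nat -> R := fun n =>
  match n with 0%N => x0 | 1%N => x1 | _ => x2 end.

Lemma test_tb (t f : R) : 0 <= t <= 1 -> 0 <= f <= 1 -> is_test (tb t f).
Proof. by move=> ht hf; split; [move=> _ Y _; exact: I | case]. Qed.

Lemma test_tn (x0 x1 x2 : R) : 0 <= x0 <= 1 -> 0 <= x1 <= 1 -> 0 <= x2 <= 1 -> is_test (tn x0 x1 x2).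
Proof. by move=> h0 h1 h2; split; [move=> _ Y _; exact: I | case=> [|[|n]]]. Qed.

Lemma test_snd (x0 x1 x2 : R) : 0 <= x0 <= 1 -> 0 <= x1 <= 1 -> 0 <= x2 <= 1 ->
  is_test (fun p : bool * nat => tn x0 x1 x2 p.2).
Proof.
move=> h0 h1 h2; split; last by move=> [b [|[|n]]].
apply: measurableT_comp; last exact: measurable_snd.
by move=> _ Y _; exact: I.
Qed.


Lemma e2 : expR (ln 2) = 2 :> R. Proof. by apply: expR_ln; lra. Qed.
Lemma e3 : expR (ln 3) = 3 :> R. Proof. by apply: expR_ln; lra. Qed.
Lemma p23 : 0 <= (2/3 : R) <= 1. Proof. by apply/andP; split; lra. Qed.
Lemma p13 : 0 <= (1/3 : R) <= 1. Proof. by apply/andP; split; lra. Qed.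

Lemma bnds_b (phi : bool -> R) : (forall x, 0 <= phi x <= 1) ->
  [/\ 0 <= phi true, phi true <= 1, 0 <= phi false & phi false <= 1].
Proof. by move=> h; case/andP: (h true) => ? ?; case/andP: (h false). Qed.

Lemma ge0_of (T : Type) (phi : T -> R) : (forall x, 0 <= phi x <= 1) -> forall x, 0 <= phi x.
Proof. by move=> h x; case/andP: (h x). Qed.

Lemma tb_ge0 (t f : R) : 0 <= t -> 0 <= f -> forall x, 0 <= tb t f x.
Proof. by move=> ht hf []. Qed.

Lemma M1_LED (al : R) : 0 <= al <= 1 ->
  tradeoff (bernoulli_prob (2/3 : R)) (bernoulli_prob (1/3 : R)) al = fED (ln 2) 0 al.
Proof.
move=> /andP[a0 a1]; rewrite /tradeoff; apply/le_anti/andP; split.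
- have HQ : forall psi, is_test psi -> expect (bernoulli_prob (1/3 : R)) psi <= 1.
    move=> psi [_ hb]; rewrite (expect_bern p13 (ge0_of hb)).
    by case: (bnds_b hb) => *; lra.
  have [ha|ha] := lerP al (1/3).
  + have Ht : is_test (tb 0 (3 * al)) by apply: test_tb; apply/andP; split; lra.
    have h0 : forall x, 0 <= tb 0 (3 * al) x by apply: tb_ge0; lra.
    apply: le_trans (tr_le HQ Ht _) _.
      by rewrite (expect_bern p23 h0) /=; lra.
    by rewrite (expect_bern p13 h0) /=; apply: le_fED2; rewrite e2; lra.
  + have Ht : is_test (tb ((3 * al - 1)/2) 1) by apply: test_tb; apply/andP; split; lra.
    have h0 : forall x, 0 <= tb ((3 * al - 1)/2) 1 x by apply: tb_ge0; lra.
    apply: le_trans (tr_le HQ Ht _) _.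
      by rewrite (expect_bern p23 h0) /=; lra.
    by rewrite (expect_bern p13 h0) /=; apply: le_fED3; rewrite expRN e2; lra.
- apply: tr_ge.
    have h0 : forall x, 0 <= tb 0 0 x by apply: tb_ge0; lra.
    exists (tb 0 0); split; first by apply: test_tb; apply/andP; split; lra.
    by rewrite (expect_bern p23 h0) /=; lra.
  move=> phi [_ hb]; rewrite (expect_bern p13 (ge0_of hb)) (expect_bern p23 (ge0_of hb)).
  move=> hle; case: (bnds_b hb) => *.
by apply: fED_leP; rewrite ?expRN ?e2; lra.
Qed.

Lemma bnds_n (phi : nat -> R) : (forall x, 0 <= phi x <= 1) ->
  [/\ 0 <= phi 0%N <= 1, 0 <= phi 1%N <= 1 & 0 <= phi 2%N <= 1].
Proof. by move=> h; split; apply: h. Qed.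

Lemma tn_ge0 (x0 x1 x2 : R) : 0 <= x0 -> 0 <= x1 -> 0 <= x2 -> forall x, 0 <= tn x0 x1 x2 x.
Proof. by move=> h0 h1 h2 [|[|n]]. Qed.

Ltac unb h := case: (bnds_n h) => /andP[? ?] /andP[? ?] /andP[? ?].

Lemma KT_LED (al : R) : 0 <= al <= 1 ->
  tradeoff (mu3 (nnq 3 4) (nnq 0 1) (nnq 1 4)) (mu3 (nnq 1 4) (nnq 0 1) (nnq 3 4)) al
  = fED (ln 3) 0 al.
Proof.
move=> /andP[a0 a1]; rewrite /tradeoff; apply/le_anti/andP; split.
- have HQ : forall psi, is_test psi -> expect (mu3 (nnq 1 4) (nnq 0 1) (nnq 3 4)) psi <= 1.
    move=> psi [_ hb]; rewrite (expect_mu3 _ _ _ (ge0_of hb)) /=.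
    by unb hb; lra.
  have [ha|ha] := lerP al (1/4).
  + have Ht : is_test (tn 0 0 (4 * al)) by apply: test_tn; apply/andP; split; lra.
    have h0 : forall x, 0 <= tn 0 0 (4 * al) x by apply: tn_ge0; lra.
    apply: le_trans (tr_le HQ Ht _) _.
      by rewrite (expect_mu3 _ _ _ h0) /=; lra.
    by rewrite (expect_mu3 _ _ _ h0) /=; apply: le_fED2; rewrite e3; lra.
  + have Ht : is_test (tn ((4 * al - 1)/3) 0 1) by apply: test_tn; apply/andP; split; lra.
    have h0 : forall x, 0 <= tn ((4 * al - 1)/3) 0 1 x by apply: tn_ge0; lra.
    apply: le_trans (tr_le HQ Ht _) _.
      by rewrite (expect_mu3 _ _ _ h0) /=; lra.
    by rewrite (expect_mu3 _ _ _ h0) /=; apply: le_fED3; rewrite expRN e3; lra.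
- apply: tr_ge.
    have h0 : forall x, 0 <= tn 0 0 0 x by apply: tn_ge0; lra.
    exists (tn 0 0 0); split; first by apply: test_tn; apply/andP; split; lra.
    by rewrite (expect_mu3 _ _ _ h0) /=; lra.
  move=> phi [_ hb]; rewrite !(expect_mu3 _ _ _ (ge0_of hb)) /=.
  move=> hle; unb hb.
  by apply: fED_leP; rewrite ?expRN ?e3; lra.
Qed.

Lemma KF_LED (al : R) : 0 <= al <= 1 ->
  tradeoff (mu3 (nnq 1 3) (nnq 2 3) (nnq 0 1)) (mu3 (nnq 0 1) (nnq 2 3) (nnq 1 3)) al
  = fED 0 (1/3) al.
Proof.
move=> /andP[a0 a1]; rewrite /tradeoff; apply/le_anti/andP; split.
- have HQ : forall psi, is_test psi -> expect (mu3 (nnq 0 1) (nnq 2 3) (nnq 1 3)) psi <= 1.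
    move=> psi [_ hb]; rewrite (expect_mu3 _ _ _ (ge0_of hb)) /=.
    by unb hb; lra.
  have [ha|ha] := lerP al (2/3).
  + have Ht : is_test (tn 0 (3 * al / 2) 1) by apply: test_tn; apply/andP; split; lra.
    have h0 : forall x, 0 <= tn 0 (3 * al / 2) 1 x by apply: tn_ge0; lra.
    apply: le_trans (tr_le HQ Ht _) _.
      by rewrite (expect_mu3 _ _ _ h0) /=; lra.
    by rewrite (expect_mu3 _ _ _ h0) /=; apply: le_fED2; rewrite expR0; lra.
  + have Ht : is_test (tn (3 * al - 2) 1 1) by apply: test_tn; apply/andP; split; lra.
    have h0 : forall x, 0 <= tn (3 * al - 2) 1 1 x by apply: tn_ge0; lra.
    apply: le_trans (tr_le HQ Ht _) _.
      by rewrite (expect_mu3 _ _ _ h0) /=; lra.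
    by rewrite (expect_mu3 _ _ _ h0) /=; apply: le_fED1; lra.
- apply: tr_ge.
    have h0 : forall x, 0 <= tn 0 0 0 x by apply: tn_ge0; lra.
    exists (tn 0 0 0); split; first by apply: test_tn; apply/andP; split; lra.
    by rewrite (expect_mu3 _ _ _ h0) /=; lra.
  move=> phi [_ hb]; rewrite !(expect_mu3 _ _ _ (ge0_of hb)) /=.
  move=> hle; unb hb.
  by apply: fED_leP; rewrite ?oppr0 ?expR0; lra.
Qed.

Ltac unb6 h :=
  case/andP: (h (true, 0%N)) => ? ?; case/andP: (h (true, 1%N)) => ? ?;
  case/andP: (h (true, 2%N)) => ? ?; case/andP: (h (false, 0%N)) => ? ?;
  case/andP: (h (false, 1%N)) => ? ?; case/andP: (h (false, 2%N)) => ? ?.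

Lemma test0 : is_test (fun _ : bool * nat => (0 : R)).
Proof. split; [exact: measurable_cst | move=> _; apply/andP; split; lra]. Qed.

Lemma prodT (al : R) : 0 <= al ->
  fED (ln 2) (1/3) al <= tradeoff_prod (bernoulli_prob (2/3 : R)) (bernoulli_prob (1/3 : R))
    (mu3 (nnq 3 4) (nnq 0 1) (nnq 1 4)) (mu3 (nnq 1 4) (nnq 0 1) (nnq 3 4)) al.
Proof.
move=> a0; apply: tr_ge.
  exists (fun _ => 0); split; first exact: test0.
  rewrite (@ec_mu3 _ _ (fun _ => nnq 3 4) (fun _ => nnq 0 1) (fun _ => nnq 1 4) _ p23) //=; lra.
move=> phi [_ hb].
rewrite (@ec_mu3 _ _ (fun _ => nnq 3 4) (fun _ => nnq 0 1) (fun _ => nnq 1 4) _ p23 (ge0_of hb)) //=.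
rewrite (@ec_mu3 _ _ (fun _ => nnq 1 4) (fun _ => nnq 0 1) (fun _ => nnq 3 4) _ p13 (ge0_of hb)) //=.
move=> hle; unb6 hb.
by apply: fED_leP; rewrite ?expRN ?e2; lra.
Qed.

Lemma prodF (al : R) : 0 <= al ->
  fED (ln 2) (1/3) al <= tradeoff_prod (bernoulli_prob (2/3 : R)) (bernoulli_prob (1/3 : R))
    (mu3 (nnq 1 3) (nnq 2 3) (nnq 0 1)) (mu3 (nnq 0 1) (nnq 2 3) (nnq 1 3)) al.
Proof.
move=> a0; apply: tr_ge.
  exists (fun _ => 0); split; first exact: test0.
  rewrite (@ec_mu3 _ _ (fun _ => nnq 1 3) (fun _ => nnq 2 3) (fun _ => nnq 0 1) _ p23) //=; lra.
move=> phi [_ hb].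
rewrite (@ec_mu3 _ _ (fun _ => nnq 1 3) (fun _ => nnq 2 3) (fun _ => nnq 0 1) _ p23 (ge0_of hb)) //=.
rewrite (@ec_mu3 _ _ (fun _ => nnq 0 1) (fun _ => nnq 2 3) (fun _ => nnq 1 3) _ p13 (ge0_of hb)) //=.
move=> hle; unb6 hb.
by apply: fED_leP; rewrite ?expRN ?e2; lra.
Qed.

Lemma adapt_viol : tradeoff_adaptive (bernoulli_prob (2/3 : R)) (bernoulli_prob (1/3 : R))
   KA KB (7/18) <= 1/12.
Proof.
have HA : forall b, KA b = mu3 (if b then nnq 3 4 else nnq 1 3) (if b then nnq 0 1 else nnq 2 3)
   (if b then nnq 1 4 else nnq 0 1) by case.
have HB : forall b, KB b = mu3 (if b then nnq 1 4 else nnq 0 1) (if b then nnq 0 1 else nnq 2 3)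
   (if b then nnq 3 4 else nnq 1 3) by case.
have HQ : forall psi, is_test psi -> expect_comp (bernoulli_prob (1/3 : R)) KB psi <= 1.
  move=> psi [_ hb]; rewrite (ec_mu3 p13 (ge0_of hb) HB) /=.
  by unb6 hb; lra.
have h0 : forall x : bool * nat, 0 <= tn 0 1 1 x.2 by move=> [b [|[|n]]] /=; lra.
have Ht : is_test (fun p : bool * nat => tn 0 1 1 p.2).
  by apply: test_snd; apply/andP; split; lra.
apply: le_trans (tr_le HQ Ht _) _.
  by rewrite (ec_mu3 p23 h0 HA) /=; lra.
by rewrite (ec_mu3 p13 h0 HB) /=; lra.
Qed.

End Aux.
Unset Implicit Arguments.

Theorem corollary5p3 (R : realType) :
  exists eps delta : R, 0 <= eps /\ 0 <= delta <= 1 /\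
    ~ ED_natural_filter_free2 eps delta.
Proof.
have l2 : 0 <= ln (2 : R) by apply: ln_ge0; lra.
have l3 : 0 <= ln (3 : R) by apply: ln_ge0; lra.
have z01 : 0 <= (0 : R) <= 1 by apply/andP; split; lra.
exists (ln 2), (1/3); split; first exact: l2.
split; first exact: p13.
move=> H.
have Had : ED_filter_adversary2 (ln 2) (1/3) (bernoulli_prob (2/3 : R))
    (bernoulli_prob (1/3 : R)) (KA R) (KB R).
  split.
    split.
      by exists (ln 2), 0; split; [exact: l2|split; [exact: z01|exact: M1_LED]].
    move=> al hal; rewrite M1_LED //.
    case/andP: hal => a0 a1.
    apply: fED_leP.
    - by apply: le_fED1; lra.
    - by apply: le_fED2; rewrite e2; lra.
    - by apply: le_fED3; rewrite expRN e2; lra.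
  case; split.
  - by exists (ln 3), 0; split; [exact: l3|split; [exact: z01|exact: KT_LED]].
  - by move=> al /andP[a0 _]; exact: prodT.
  - by exists 0, (1/3); split; [lra|split; [exact: p13|exact: KF_LED]].
  - by move=> al /andP[a0 _]; exact: prodF.
have h1 := H _ _ _ _ _ _ _ _ Had (7/18).
have h2 : 0 <= (7/18 : R) <= 1 by apply/andP; split; lra.
have h3 := adapt_viol R.
have h4 : 5/36 <= fED (ln 2) (1/3) (7/18 : R) by apply: le_fED3; rewrite expRN e2; lra.
have := h1 h2; lra.
Qed.
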